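(* Let $1\le a<b$ and $m\ge1$ be integers, let $t_a,\dots,t_{b-1}$ be indeterminates, and let $x^{(k)}_1,\dots,x^{(k)}_m$ ($a\le k\le b$) be variables. Let $S^{(k)}_m$ denote the symmetric group permuting $x^{(k)}_1,\dots,x^{(k)}_m$. Then $$\sum_{w\in S^{(a)}_m\times\cdots\times S^{(b-1)}_m}w\left(\prod_{a\le k<b}\prod_{2\le j\le m}\frac{x^{(k)}_1-t_kx^{(k+1)}_j}{x^{(k)}_1-x^{(k)}_j}\right)=\bigl((m-1)!\bigr)^{b-a}.$$
   Context: The group $S^{(a)}_m\times\cdots\times S^{(b-1)}_m$ acts on rational functions by permuting the variables $x^{(k)}_i$ within each family $k\in\{a,\dots,b-1\}$ and fixing the variables $x^{(b)}_j$ and the $t_k$. *)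

(* Defs.v *)
From HB Require Import structures.
From mathcomp Require Import all_boot all_order all_algebra all_fingroup.
Set Implicit Arguments. Unset Strict Implicit. Unset Printing Implicit Defensive.
Import GRing.Theory.
Local Open Scope ring_scope.

(* Variables x^(k)_i are encoded as [x k i] with k : nat (absolute family
   index) and i : 'I_m (0-based, so x^(k)_1 is index 0).  An element
   w of S^(a)_m x ... x S^(b-1)_m is a finite function
   w : {ffun 'I_(b-a) -> 'S_m}, component w l acting on family a+l.
   [wvar] gives the image of the variable x^(k)_i under w
   (families outside [a,b) are fixed). *)
Definition wvar (F : Type) (a b m : nat) (x : nat -> 'I_m -> F)
  (w : {ffun 'I_(b - a) -> 'S_m}) (k : nat) (i : 'I_m) : F :=
  match insub (k - a)%N with
  | Some l => if (a <= k)%N then x k (w l i) else x k i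
  | None => x k i
  end.

Definition wterm (F : fieldType) (a b m : nat) (hm : (0 < m)%N)
  (x : nat -> 'I_m -> F) (t : nat -> F) (w : {ffun 'I_(b - a) -> 'S_m}) : F :=
  let i1 := Ordinal hm in
  \prod_(l < b - a) \prod_(j : 'I_m | j != i1)
     ((wvar x w (a + l) i1 - t (a + l)%N * wvar x w (a + l).+1 j)
      / (wvar x w (a + l) i1 - wvar x w (a + l) j)).

(* Main.v *)
Require Import Defs.
Set Warnings "-notation-overridden -ambiguous-paths".
From HB Require Import structures.
From mathcomp Require Import all_boot all_order all_algebra all_fingroup.
Set Implicit Arguments. Unset Strict Implicit. Unset Printing Implicit Defensive.
Import GRing.Theory.
Local Open Scope ring_scope.

Lemma size_prodXsubC1 (F : fieldType) m (i : 'I_m) (c : 'I_m -> F) :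
  size (\prod_(k | k != i) ('X - (c k)%:P)) = m.
Proof.
rewrite -big_filter size_prod_XsubC deprecated_filter_index_enum -cardE.
have -> : #|[pred k | k != i]| = #|predC1 i| by apply: eq_card.
rewrite cardC1 card_ord; by case: m i c => [[]|].
Qed.

Lemma lagrange_sum (F : fieldType) m (x : 'I_m -> F) (hx : injective x)
  (P : {poly F}) : (size P <= m)%N ->
  \sum_(i < m) P.[x i] / \prod_(k | k != i) (x i - x k) = P`_m.-1.
Proof.
move=> sP.
pose D i := \prod_(k | k != i) (x i - x k).
pose L i := \prod_(k | k != i) ('X - (x k)%:P).
pose Q := \sum_(i < m) (P.[x i] / D i) *: L i.
have LX i j : (L i).[x j] = if j == i then D i else 0.
  rewrite /L horner_prod; have [->|ji] := eqVneq j i.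
    by apply: eq_bigr => k _; rewrite !hornerE.
  by rewrite (bigD1 j) //= !hornerE subrr mul0r.
have DN i : D i != 0.
  apply/prodf_neq0 => k ki.
  by rewrite subr_eq0; apply: contra ki => /eqP/hx ->.
have QP : Q = P.
  apply/eqP; rewrite -subr_eq0; apply/eqP.
  apply: (@roots_geq_poly_eq0 _ _ [seq x i | i <- enum 'I_m]).
  - apply/allP => _ /mapP [j _ ->].
    rewrite /root hornerD hornerN /Q horner_sum (bigD1 j) //= big1.
      by rewrite hornerZ LX eqxx divfK // addr0 subrr.
    by move=> i ji; rewrite hornerZ LX eq_sym (negbTE ji) mulr0.
  - by rewrite map_inj_uniq ?enum_uniq.
  - rewrite size_map size_enum_ord (leq_trans (size_polyD _ _)) //.
    rewrite size_polyN geq_max sP andbT (leq_trans (size_sum _ _ _)) //.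
    apply/bigmax_leqP => i _; rewrite (leq_trans (size_scale_leq _ _)) //.
    by rewrite /L size_prodXsubC1.
rewrite -[in RHS]QP /Q coef_sum; apply: eq_bigr => i _.
rewrite coefZ.
have : lead_coef (L i) = 1 by apply: lead_coef_prod_XsubC.
by rewrite lead_coefE /L size_prodXsubC1 => ->; rewrite mulr1.
Qed.

Lemma card_perm_fix (T : finType) (x y : T) :
  #|[set s : {perm T} | s x == y]| = (#|T|.-1)`!.
Proof.
have E1 : #|[set s : {perm T} | s x == x]| = (#|T|.-1)`!.
  rewrite -(cardsC1 x) -card_perm; apply: eq_card => s.
  rewrite inE; apply/eqP/idP => [sx|pS].
    apply/subsetP => z; rewrite !inE; apply: contra => /eqP ->.
    by rewrite sx.
  by apply: (out_perm pS); rewrite !inE eqxx.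
rewrite -E1 -(card_imset [set s : {perm T} | s x == x] (mulIg (tperm x y))).
apply: eq_card => s.
apply/idP/imsetP => [|[s0]].
  rewrite inE => /eqP sx; exists (s * tperm x y)%g.
    by rewrite inE permM sx tpermR.
  by rewrite -mulgA tperm2 mulg1.
by rewrite inE => /eqP s0x ->; rewrite inE permM s0x tpermL.
Qed.

Section Main.
Variables (F : fieldType) (m : nat) (i1 : 'I_m).

Definition G (X : nat -> 'I_m -> F) (T : nat -> F) (l : nat) (s u : 'S_m) : F :=
  \prod_(j | j != i1) ((X l (s i1) - T l * X l.+1 (u j)) / (X l (s i1) - X l (s j))).

Lemma key (X : nat -> 'I_m -> F) (T : nat -> F) l (u : 'S_m) :
  injective (X l) -> \sum_(s : 'S_m) G X T l s u = ((m.-1)`!)%:R.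
Proof.
move=> injX.
pose P := \prod_(j | j != i1) ('X - (T l * X l.+1 (u j))%:P).
pose H i := P.[X l i] / \prod_(k | k != i) (X l i - X l k).
have GH s : G X T l s u = H (s i1).
  rewrite /G /H big_split /= prodfV horner_prod.
  congr (_ * _^-1); first by apply: eq_bigr => j _; rewrite !hornerE.
  rewrite [RHS](reindex_inj (@perm_inj _ s)) /=.
  by apply: eq_bigl => j; rewrite (inj_eq (@perm_inj _ s)).
under eq_bigr do rewrite GH.
rewrite (partition_big (fun s : 'S_m => s i1) predT) //=.
have -> : \sum_(j < m) \sum_(s : 'S_m | true && (s i1 == j)) H (s i1)
        = \sum_(j < m) H j *+ (m.-1)`!.
  apply: eq_bigr => j _.
  rewrite (eq_bigr (fun _ => H j)); last by move=> s /= /eqP ->.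
  rewrite sumr_const; congr (_ *+ _).
  rewrite -[in RHS](card_ord m) -(card_perm_fix i1 j); apply: eq_card => s.
  by rewrite !inE.
rewrite sumrMnl lagrange_sum //; last by rewrite size_prodXsubC1.
suff -> : P`_m.-1 = 1 by [].
have := lead_coef_prod_XsubC (index_enum 'I_m) (fun j => j != i1)
  (fun j => T l * X l.+1 (u j)).
by rewrite lead_coefE size_prodXsubC1.
Qed.
End Main.

Definition fcons (S : finType) n (s : S) (w : {ffun 'I_n -> S}) : {ffun 'I_n.+1 -> S} :=
  [ffun i => if unlift ord0 i is Some j then w j else s].

Lemma sum_ffun_split (R : nmodType) (S : finType) n (f : {ffun 'I_n.+1 -> S} -> R) :
  \sum_(w : {ffun 'I_n.+1 -> S}) f w
  = \sum_(s : S) \sum_(w : {ffun 'I_n -> S}) f (fcons s w).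
Proof.
rewrite pair_big /=.
rewrite (reindex (fun p : S * {ffun 'I_n -> S} => fcons p.1 p.2)) //=.
exists (fun w : {ffun 'I_n.+1 -> S} => (w ord0, [ffun j => w (lift ord0 j)])).
  move=> [s w] _ /=; rewrite /fcons ffunE unlift_none; congr (_, _).
  by apply/ffunP => j; rewrite !ffunE liftK.
move=> w _ /=; apply/ffunP => i; rewrite /fcons ffunE.
by case: unliftP => [j ->|->]; rewrite ?ffunE.
Qed.

Section Main2.
Variables (F : fieldType) (m : nat) (i1 : 'I_m).

Definition wf n (w : {ffun 'I_n -> 'S_m}) (k : nat) : 'S_m :=
  if insub k is Some k' then w k' else 1%g.

Lemma wf_cons0 n s (w : {ffun 'I_n -> 'S_m}) : wf (fcons s w) 0 = s.
Proof.
rewrite /wf; case: insubP => [k _ hk|] //=.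
have -> : k = ord0 by apply: val_inj.
by rewrite ffunE unlift_none.
Qed.

Lemma wf_consS n s (w : {ffun 'I_n -> 'S_m}) k : wf (fcons s w) k.+1 = wf w k.
Proof.
rewrite /wf; case: insubP => [k1 hk1 e1|hk1]; case: insubP => [k2 hk2 e2|hk2] //=.
- have -> : k1 = lift ord0 k2 by apply: val_inj; rewrite e1 /= /bump /= e2.
  by rewrite ffunE liftK.
- by move: hk1 hk2 => /=; rewrite ltnS => ->.
- by move: hk1 hk2 => /=; rewrite ltnS => /negbTE ->.
Qed.

Lemma main n (X : nat -> 'I_m -> F) (T : nat -> F) :
  (forall l, (l < n)%N -> injective (X l)) ->
  \sum_(w : {ffun 'I_n -> 'S_m}) \prod_(l < n) G i1 X T l (wf w l) (wf w l.+1)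
  = ((m.-1)`!)%:R ^+ n.
Proof.
elim: n X T => [|n IH] X T hX.
  rewrite expr0 (eq_bigr (fun _ => 1)); last by move=> w _; rewrite big_ord0.
  rewrite sumr_const card_ffun card_ord /= expn0 //.
rewrite sum_ffun_split exprS.
under eq_bigr do under eq_bigr do rewrite big_ord_recl wf_cons0 wf_consS.
under eq_bigr do under eq_bigr do under eq_bigr do rewrite lift0 !wf_consS.
rewrite exchange_big /=.
have hk u : \sum_(s : 'S_m) G i1 X T 0 s u = ((m.-1)`!)%:R by apply: key; apply: hX.
under eq_bigr do rewrite -big_distrl /= hk.
rewrite -big_distrr /=; congr (_ * _).
rewrite -(IH (fun l => X l.+1) (fun l => T l.+1)); last by move=> l hl; apply: hX.
apply: eq_bigr => w _; apply: eq_bigr => i _.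
by [].
Qed.
End Main2.

Lemma wvarE (F : fieldType) a b m (x : nat -> 'I_m -> F)
  (w : {ffun 'I_(b - a) -> 'S_m}) k i :
  (a <= k)%N -> wvar x w k i = x k (wf w (k - a) i).
Proof.
move=> hk; rewrite /wvar /wf; case: insub => [l|]; rewrite ?hk //.
by rewrite perm1.
Qed.

Theorem lemma5p6 (F : fieldType) (a b m : nat) (ha : (1 <= a)%N) (hab : (a < b)%N)
  (hm : (0 < m)%N) (x : nat -> 'I_m -> F) (t : nat -> F)
  (hx : forall k, (a <= k < b)%N -> forall i j : 'I_m, i != j -> x k i != x k j) :
  \sum_(w : {ffun 'I_(b - a) -> 'S_m}) wterm hm x t w = ((m.-1)`!)%:R ^+ (b - a).
Proof.
rewrite -(@main F m (Ordinal hm) (b - a) (fun l => x (a + l)%N) (fun l => t (a + l)%N)).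
  apply: eq_bigr => w _; rewrite /wterm; apply: eq_bigr => l _.
  rewrite /G; apply: eq_bigr => j _.
  rewrite !wvarE ?leq_addr ?addKn //; last by rewrite -addnS leq_addr.
  by rewrite -addnS addKn.
move=> l hl i j e; apply/eqP; case: (eqVneq i j) => // /(hx (a + l)%N).
rewrite leq_addr -ltn_subRL hl => /(_ isT).
by rewrite e eqxx.
Qed.
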